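(* Let $r\ge 4$ and let $p_1,\dots,p_r$ be points in general position in $\mathbb{P}^3$ over an algebraically closed field of characteristic $0$. For integers $d\ge 0$ and $m_1,\dots,m_r\ge 0$, let $\mathcal{L}=\mathcal{L}_3(d,m_1,\dots,m_r)$ and put $k=2d-\sum_{i=1}^4 m_i$ and $$\mathrm{Cr}(\mathcal{L})=\mathcal{L}_3(d+k,\,m_1+k,\dots,m_4+k,\,m_5,\dots,m_r).$$ Suppose that $2d\ge m_i+m_j+m_k$ for every choice of three distinct indices $\{i,j,k\}\subset\{1,2,3,4\}$. For $1\le i<j\le 4$ set $t_{ij}=m_i+m_j-d$. Then $$v(\mathrm{Cr}(\mathcal{L}))-v(\mathcal{L})=\sum_{\substack{1\le i<j\le 4\\ t_{ij}\ge 2}}\binom{1+t_{ij}}{3}-\sum_{\substack{1\le i<j\le 4\\ t_{ij}\le -2}}\binom{1-t_{ij}}{3}.$$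
   Context: $\mathcal{L}_3(d,m_1,\dots,m_r)$ denotes the linear system of surfaces of degree $d$ in $\mathbb{P}^3$ passing through the general points $p_1,\dots,p_r$ with multiplicity at least $m_i$ at $p_i$. Its virtual dimension is $v(\mathcal{L}_3(d,m_1,\dots,m_r))=\binom{d+3}{3}-\sum_{i=1}^r\binom{m_i+2}{3}-1$. The system $\mathrm{Cr}(\mathcal{L})$ is the image of $\mathcal{L}$ under the cubo-cubic Cremona transformation $(x_0:x_1:x_2:x_3)\dashrightarrow(x_0^{-1}:x_1^{-1}:x_2^{-1}:x_3^{-1})$ with $p_1,\dots,p_4$ placed at the coordinate points. *)

(* Defs.v *)
From mathcomp Require Import all_boot all_order all_algebra.
Set Implicit Arguments. Unset Strict Implicit. Unset Printing Implicit Defensive.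
Import Order.TTheory GRing.Theory Num.Theory.
Local Open Scope ring_scope.

(* Binomial coefficient binom(n, k) for an integer top argument n;
   set to 0 for n < 0 (never used in that range under the hypotheses). *)
Definition binz (n : int) (k : nat) : int :=
  if (0 <= n) then (('C(`|n|%N, k))%:Z) else 0.

Definition vdim3 (d : int) (m : seq int) : int :=
  binz (d + 3) 3 - \sum_(x <- m) binz (x + 2) 3 - 1.

(* The linear system L_3(d, m) with integer data, m = [m_1; ...; m_r]
   (indices shifted: p_1..p_4 are positions 0..3). *)
Definition sysL (d : nat) (m : seq nat) : int * seq int :=
  (d%:Z, [seq (x%:Z) | x <- m]).

Definition vL (L : int * seq int) : int := vdim3 L.1 L.2.

Definition kCr (d : nat) (m : seq nat) : int :=
  2 * d%:Z - \sum_(i < 4) (nth 0%N m i)%:Z.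

Definition Cr (d : nat) (m : seq nat) : int * seq int :=
  (d%:Z + kCr d m,
   [seq (if (i < 4)%N then (nth 0%N m i)%:Z + kCr d m else (nth 0%N m i)%:Z)
   | i <- iota 0 (size m)]).

Definition tij (d : nat) (m : seq nat) (i j : nat) : int :=
  (nth 0%N m i)%:Z + (nth 0%N m j)%:Z - d%:Z.

(* Main.v *)
Require Import Defs.
From mathcomp Require Import all_boot all_order all_algebra.
From mathcomp Require Import zify ring lra.
Import Order.TTheory GRing.Theory Num.Theory.
Local Open Scope ring_scope.

Lemma bin2Z (n : nat) : (2 * 'C(n, 2))%:Z = n%:Z * (n%:Z - 1).
Proof.
elim: n => [|n IH] //.
rewrite binS bin1 PoszM PoszD mulrDr -PoszM IH -[n.+1]addn1 PoszD; ring.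
Qed.

Lemma bin3Z (n : nat) : (6 * 'C(n, 3))%:Z = n%:Z * (n%:Z - 1) * (n%:Z - 2).
Proof.
elim: n => [|n IH] //.
rewrite binS mulnDr PoszD IH.
have H2 := bin2Z n; rewrite PoszM in H2.
rewrite -[n.+1]addn1 PoszD PoszM; lia.
Qed.

Lemma binzE (n : int) : 0 <= n -> 6 * binz n 3 = n * (n - 1) * (n - 2).
Proof.
move=> hn; rewrite /binz hn.
case: n hn => // n _; rewrite -bin3Z PoszM //.
Qed.

Lemma termE (t : int) :
  6 * ((if 2 <= t then binz (1 + t) 3 else 0) - (if t <= -2 then binz (1 - t) 3 else 0))
  = (t + 1) * t * (t - 1).
Proof.
case: (lerP 2 t) => h1.
  have -> : (t <= -2) = false by apply/negbTE; rewrite -ltNge; lia.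
  rewrite subr0 binzE; [ring | lia].
case: (lerP t (-2)) => h2.
  rewrite sub0r mulrN binzE; [ring | lia].
have : (t == -1) || (t == 0) || (t == 1) by lia.
by case/orP => [/orP[]|] /eqP ->.
Qed.
Theorem mainTheorem1 (r d : nat) (m : seq nat)
  (hr : (4 <= r)%N) (hm : size m = r)
  (h3 : forall i j k : 'I_4, i != j -> j != k -> i != k ->
        (nth 0 m i + nth 0 m j + nth 0 m k <= 2 * d)%N) :
  vL (Cr d m) - vL (sysL d m) =
    \sum_(i < 4) \sum_(j < 4 | (i < j)%N)
       (if 2 <= tij d m i j then binz (1 + tij d m i j) 3 else 0)
  - \sum_(i < 4) \sum_(j < 4 | (i < j)%N)
       (if tij d m i j <= -2 then binz (1 - tij d m i j) 3 else 0).
Proof.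
have h012 := h3 0 1 2 erefl erefl erefl.
have h013 := h3 0 1 3 erefl erefl erefl.
have h023 := h3 0 2 3 erefl erefl erefl.
have h123 := h3 1 2 3 erefl erefl erefl.
move: h012 h013 h023 h123; rewrite /=.
case: m hm h3 => [|a [|b [|c [|e rest]]]] hm _ //=; try (subst r; done).
move=> h012 h013 h023 h123.
rewrite -sumrB; under eq_bigr do rewrite -sumrB big_mkcond.
rewrite !big_ord_recl !big_ord0 /=.
rewrite /vL /Cr /sysL /kCr /vdim3 /tij /=.
rewrite !big_ord_recl !big_ord0 /=.
have -> : [seq (if (i < 4)%N then (nth 0%N [:: a, b, c, e & rest] i)%:Z + (2 * d%:Z - (a%:Z + (b%:Z + (c%:Z + (e%:Z + 0))))) else (nth 0%N [:: a, b, c, e & rest] i)%:Z) | i <- iota 4 (size rest)] = [seq x%:Z | x <- rest].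
  rewrite (iotaDl 4 0) -map_comp.
  rewrite -[in RHS](mkseq_nth 0%N rest) /mkseq -map_comp.
  by apply: eq_map => i /=.
rewrite !big_cons.
set S := \sum_(j <- _) _.
have := termE (a%:Z + b%:Z - d%:Z).
have := termE (a%:Z + c%:Z - d%:Z).
have := termE (a%:Z + e%:Z - d%:Z).
have := termE (b%:Z + c%:Z - d%:Z).
have := termE (b%:Z + e%:Z - d%:Z).
have := termE (c%:Z + e%:Z - d%:Z).
set K := 2 * d%:Z - _.
have := binzE (d%:Z + K + 3) ltac:(rewrite /K; lia).
have := binzE (a%:Z + K + 2) ltac:(rewrite /K; lia).
have := binzE (b%:Z + K + 2) ltac:(rewrite /K; lia).
have := binzE (c%:Z + K + 2) ltac:(rewrite /K; lia).
have := binzE (e%:Z + K + 2) ltac:(rewrite /K; lia).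
have := binzE (d%:Z + 3) ltac:(lia).
have := binzE (a%:Z + 2) ltac:(lia).
have := binzE (b%:Z + 2) ltac:(lia).
have := binzE (c%:Z + 2) ltac:(lia).
have := binzE (e%:Z + 2) ltac:(lia).
do 6! (set I := ((if _ then _ else _) - (if _ then _ else _)); clearbody I; move: I).
do 10! (set B := binz _ _; clearbody B; move: B).
rewrite /K; clearbody S; intros.
clear K.
apply: (@mulfI _ 6%:Z) => //.
rewrite !(mulrDr, mulrBr, mulrN, mulr0, mulr1).
rewrite H H0 H1 H2 H3 H4 H5 H6 H7 H8 H9 H10 H11 H12 H13 H14.
ring.
Qed.
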